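(* For every prime power $q$ and all $k,r,\ell,m\in\mathbb{N}$ such that $k\leq r\leq\ell\leq q/2$, $m(k-1)<r$, and $m(\ell-1)<n:=q-r$, there exists an $[[n,\,k,\,\geq\ell+1-r]]_q$ quantum CSS code $Q$ (with a $Z$ encoding function on $\mathbb{F}_{q^k}$) that is $m$-multiplication-friendly.
   Context: $x*y$ is the componentwise product, $x\cdot y=\sum_ix_iy_i$, $V^\perp$ the dual. A quantum CSS code $\mathrm{CSS}(Q_X,Q_Z)$ of length $n$ over $\mathbb{F}_q$ is a pair of subspaces $Q_X,Q_Z\subseteq\mathbb{F}_q^n$ with $Q_X^\perp\subseteq Q_Z$, of dimension $k=\dim Q_Z-\dim Q_X^\perp$ and distance $\min\{|y|:y\in(Q_X\setminus Q_Z^\perp)\cup(Q_Z\setminus Q_X^\perp)\}$. A $Z$ encoding function is an $\mathbb{F}_q$-linear isomorphism $\mathrm{Enc}_Z:\mathbb{F}_{q^k}\to Q_Z/Q_X^\perp$ (viewing $\mathbb{F}_{q^k}$ as a $k$-dimensional $\mathbb{F}_q$-space). A code $Q=\mathrm{CSS}(Q_X,Q_Z;\mathrm{Enc}_Z)$ is $m$-multiplication-friendly if there is an $\mathbb{F}_q$-linear $\mathrm{Dec}_Z:\mathbb{F}_q^n\to\mathbb{F}_{q^k}$ such that for all $z_1,\dots,z_m\in\mathbb{F}_{q^k}$ and all $z_h'\in\mathrm{Enc}_Z(z_h)$, $z_1z_2\cdots z_m=\mathrm{Dec}_Z(z_1'*\cdots*z_m')$. *)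

(* Defs.v *)
From HB Require Import structures.
From mathcomp Require Import all_boot all_order all_algebra all_field.
Set Implicit Arguments. Unset Strict Implicit. Unset Printing Implicit Defensive.
Import GRing.Theory.
Local Open Scope ring_scope.

(* Vectors of F^n are row vectors 'rV[F]_n; subspaces of F^n are represented
   (mxalgebra style) by square matrices 'M[F]_n through their row space.    *)

Definition dotv (F : fieldType) n (x y : 'rV[F]_n) : F := \sum_(i < n) x 0 i * y 0 i.

Definition wt (F : fieldType) n (x : 'rV[F]_n) : nat := #|[set i | x 0 i != 0]|.

Definition hprod (F : fieldType) n m (z : 'I_m -> 'rV[F]_n) : 'rV[F]_n :=
  \row_(i < n) \prod_(h < m) z h 0 i.

Definition dualmx (F : fieldType) n (V : 'M[F]_n) : 'M[F]_n := kermx V^T.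

Definition is_CSS (F : fieldType) n (QX QZ : 'M[F]_n) : Prop :=
  (dualmx QX <= QZ)%MS.

Definition css_dim (F : fieldType) n (QX QZ : 'M[F]_n) : nat :=
  (\rank QZ - \rank (dualmx QX))%N.

Definition css_dist_ge (F : fieldType) n (QX QZ : 'M[F]_n) (d : nat) : Prop :=
  forall y : 'rV[F]_n,
    ((y <= QX)%MS && ~~ (y <= dualmx QZ)%MS) || ((y <= QZ)%MS && ~~ (y <= dualmx QX)%MS) ->
    (d <= wt y)%N.

(* A Z encoding function Enc_Z : L -> Q_Z / Q_X^perp (F-linear isomorphism),
   given through an F-linear lift E : L -> F^n : Enc_Z(z) is the coset
   E z + Q_X^perp. *)
Definition Z_encoding (F : fieldType) (L : fieldExtType F) n (QX QZ : 'M[F]_n)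
    (E : L -> 'rV[F]_n) : Prop :=
  [/\ forall (a : F) (u v : L), E (a *: u + v) = a *: E u + E v,
      forall z : L, (E z <= QZ)%MS,
      forall z : L, (E z <= dualmx QX)%MS -> z = 0 &
      forall y : 'rV[F]_n, (y <= QZ)%MS -> exists z : L, (y - E z <= dualmx QX)%MS].

Definition in_Enc (F : fieldType) (L : fieldExtType F) n (QX : 'M[F]_n)
    (E : L -> 'rV[F]_n) (z : L) (z' : 'rV[F]_n) : Prop :=
  (z' - E z <= dualmx QX)%MS.

Definition mult_friendly (F : fieldType) (L : fieldExtType F) n (QX : 'M[F]_n)
    (E : L -> 'rV[F]_n) (m : nat) : Prop :=
  exists Dec : 'rV[F]_n -> L,
    (forall (a : F) (u v : 'rV[F]_n), Dec (a *: u + v) = a *: Dec u + Dec v) /\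
    forall (z : 'I_m -> L) (z' : 'I_m -> 'rV[F]_n),
      (forall h, in_Enc QX E (z h) (z' h)) ->
      \prod_(h < m) z h = Dec (hprod z').

(* Main.v *)
Require Import Defs.
From HB Require Import structures.
From mathcomp Require Import all_boot all_order all_algebra all_field.
From mathcomp Require Import ring lra zify.
Set Implicit Arguments. Unset Strict Implicit. Unset Printing Implicit Defensive.
Import GRing.Theory.
Local Open Scope ring_scope.

Section Basics.
Variables (F : fieldType) (n : nat) (a : 'I_n -> F).
Hypothesis a_inj : injective a.

Definition ev (f : {poly F}) : 'rV[F]_n := \row_i f.[a i].
Definition Mx (g : {poly F}) d : 'M[F]_(d, n) := \matrix_(j < d, i < n) (g * 'X^j).[a i].
Local Notation polyv := (@rVpoly F _).

Lemma evD f g : ev (f + g) = ev f + ev g.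
Proof. by apply/rowP => i; rewrite !mxE hornerD. Qed.
Lemma evB f g : ev (f - g) = ev f - ev g.
Proof. by apply/rowP => i; rewrite !mxE hornerD hornerN. Qed.
Lemma evZ c f : ev (c *: f) = c *: ev f.
Proof. by apply/rowP => i; rewrite !mxE hornerZ. Qed.

Lemma mulMx g d (v : 'rV_d) : v *m Mx g d = ev (g * polyv v).
Proof.
apply/rowP => i; rewrite !mxE hornerM horner_poly mulr_sumr.
apply: eq_bigr => j _; rewrite !mxE hornerM hornerXn valK; ring.
Qed.

Lemma size_polyv d (v : 'rV_d) : (size (polyv v) <= d)%N.
Proof. exact: size_poly. Qed.

Lemma polyv_eq0 d (v : 'rV_d) : polyv v = 0 -> v = 0.
Proof. by move=> h; rewrite -[v]rVpolyK h linear0. Qed.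

Lemma sub_Mx g d (y : 'rV_n) : (y <= Mx g d)%MS -> exists h : {poly F}, (size h <= d)%N /\ y = ev (g * h).
Proof. by case/submxP => v ->; exists (polyv v); rewrite mulMx size_polyv. Qed.

Lemma Mx_sub g d (h : {poly F}) : (size h <= d)%N -> (ev (g * h) <= Mx g d)%MS.
Proof. by move=> hs; apply/submxP; exists (poly_rV h); rewrite mulMx poly_rV_K. Qed.

Lemma ev_eq0 (f : {poly F}) : (size f <= n)%N -> ev f = 0 -> f = 0.
Proof.
move=> fs e; apply/eqP; apply: contraT => nz.
have := max_poly_roots nz (rs := [seq a i | i <- enum 'I_n]).
rewrite size_map size_enum_ord => H.
have : (n < size f)%N.
  apply: H.
    apply/allP => x /mapP [i _ ->]; apply/rootP.
    by have := congr1 (fun w : 'rV_n => w 0 i) e; rewrite !mxE.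
  by rewrite map_inj_uniq ?enum_uniq.
by rewrite ltnNge fs.
Qed.

Lemma row_free_Mx (g : {poly F}) d : g != 0 -> ((size g).-1 + d <= n)%N -> row_free (Mx g d).
Proof.
move=> gnz sz; apply: inj_row_free => v; rewrite mulMx => e.
apply: polyv_eq0; apply/eqP; apply: contraT => pnz.
have : g * polyv v = 0.
  apply: ev_eq0 e.
  rewrite (leq_trans (size_mul_leq _ _)) // (leq_trans _ sz) //.
  have := size_polyv v; case: (size g) => [|sg] /=; lia.
by move/eqP; rewrite mulf_eq0 (negPf gnz) (negPf pnz).
Qed.

End Basics.


Lemma dual_genP (F : fieldType) m n d (A : 'M[F]_(d, n)) (y : 'M_(m, n)) :
  (y <= dualmx <<A>>)%MS -> y *m A^T = 0.
Proof.
rewrite /dualmx => /sub_kermxP H.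
have /submxP [D ->] : (A <= <<A>>)%MS by rewrite genmxE.
by rewrite trmx_mul mulmxA H mul0mx.
Qed.

Lemma dualdual (F : fieldType) n d (A : 'M[F]_(d, n)) :
  (dualmx (dualmx <<A>>) :=: A)%MS.
Proof.
have sub : (A <= dualmx (dualmx <<A>>))%MS.
  apply/sub_kermxP; rewrite -[A *m _]trmxK trmx_mul trmxK.
  by rewrite (dual_genP (submx_refl _)) trmx0.
apply: eqmx_sym; apply/eqmxP; rewrite -(geq_leqif (mxrank_leqif_eq sub)).
by rewrite /dualmx !mxrank_ker !mxrank_tr mxrank_ker mxrank_tr genmxE subKn ?rank_leq_col.
Qed.

Section Ext.
Variables (F : fieldType) (L : fieldExtType F) (th : L).
Definition evth (g : {poly F}) : L := (map_poly (in_alg L) g).[th].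

Lemma evthD (f g : {poly F}) : evth (f + g) = evth f + evth g.
Proof. by rewrite /evth rmorphD hornerD. Qed.
Lemma evthB (f g : {poly F}) : evth (f - g) = evth f - evth g.
Proof. by rewrite /evth rmorphB hornerD hornerN. Qed.
Lemma evthZ c (f : {poly F}) : evth (c *: f) = c *: evth f.
Proof. by rewrite /evth map_polyZ hornerZ mulr_algl. Qed.
Lemma evthM (f g : {poly F}) : evth (f * g) = evth f * evth g.
Proof. by rewrite /evth rmorphM hornerM. Qed.
Lemma evth_prod m (f : 'I_m -> {poly F}) : evth (\prod_(h < m) f h) = \prod_(h < m) evth (f h).
Proof. by rewrite /evth rmorph_prod horner_prod. Qed.

Lemma evth_rVpoly d (w : 'rV[F]_d) : evth (rVpoly w) = \sum_(j < d) w 0 j *: th ^+ j.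
Proof.
rewrite /evth /rVpoly poly_def rmorph_sum horner_sum; apply: eq_bigr => j _.
by rewrite valK -mul_polyC rmorphM /= map_polyC map_polyXn hornerM hornerC hornerXn mulr_algl.
Qed.

End Ext.


Section Code.
Variables (F : fieldType) (L : fieldExtType F) (n k l m d : nat) (a : 'I_n -> F)
  (th : L) (p : {poly F}).
Hypotheses (a_inj : injective a) (pth : evth th p = 0)
  (pdvd : forall f, evth th f = 0 -> p %| f) (sizep : size p = k.+1)
  (pa : forall i, p.[a i] != 0) (spanth : forall v : L, exists g, v = evth th g)
  (kl : (k <= l)%N) (ln : (l <= n)%N) (d1 : (d <= n - l.-1)%N) (d2 : (d <= l - k + 1)%N)
  (mn : (m * l.-1 < n)%N).

Local Notation ev := (ev a).
Local Notation Mx := (Mx a).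
Local Notation evth := (evth th).

Lemma pnz : p != 0.
Proof. by rewrite -size_poly_eq0 sizep. Qed.

Lemma size_pmul (h : {poly F}) : (size h <= l - k)%N -> (size (p * h)%R <= l)%N.
Proof.
move=> hs; rewrite (leq_trans (size_polyMleq _ _)) // sizep addSn /=. rewrite -(subnKC kl) leq_add2l. done.
Qed.

Lemma size_sub (f g : {poly F}) : (size (f - g)%R <= maxn (size f) (size g))%N.
Proof. by rewrite (leq_trans (size_polyD _ _)) // size_polyN. Qed.

Definition B := [tuple th ^+ j | j < k].
Definition gz (v : L) : {poly F} := rVpoly (\row_(j < k) coord B j v : 'rV[F]_k).

Lemma size_gz v : (size (gz v) <= k)%N.
Proof. exact: size_poly. Qed.

Lemma gzP c u v : gz (c *: u + v) = c *: gz u + gz v.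
Proof.
rewrite /gz -linearP; congr rVpoly; apply/rowP => j; rewrite !mxE.
by rewrite linearP.
Qed.

Lemma evth_small (h : {poly F}) : (size h <= k)%N -> evth h \in <<B>>%VS.
Proof.
move=> hs; rewrite -(poly_rV_K hs) evth_rVpoly.
apply: rpred_sum => j _; apply: rpredZ; apply: memv_span.
have -> : th ^+ j = tnth B j by rewrite tnth_mktuple.
exact: mem_tnth.
Qed.

Lemma evth_mod (g : {poly F}) : evth g = evth (g %% p).
Proof.
by rewrite {1}(divp_eq g p) evthD evthM pth mulr0 add0r.
Qed.

Lemma evth_gz v : evth (gz v) = v.
Proof.
have vB : v \in <<B>>%VS.
  have [g ->] := spanth v; rewrite evth_mod; apply: evth_small.
  by rewrite -ltnS -sizep ltn_modp pnz.
rewrite /gz evth_rVpoly {2}(coord_span vB); apply: eq_bigr => j _.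
by rewrite mxE -(tnth_nth 0) tnth_mktuple.
Qed.


Lemma gz_ev_sub (f : {poly F}) : (size f <= l)%N ->
  exists q : {poly F}, (size q <= l - k)%N /\ f - gz (evth f) = p * q.
Proof.
move=> fs.
have /dvdpP [q Hq] : p %| f - gz (evth f).
  by apply: pdvd; rewrite evthB evth_gz subrr.
exists q; split; last by rewrite Hq mulrC.
have hs : (size (f - gz (evth f))%R <= l)%N.
  by rewrite (leq_trans (size_sub _ _)) // geq_max fs (leq_trans (size_gz _)).
have [->|qnz] := eqVneq q 0; first by rewrite size_poly0.
move: hs; rewrite Hq size_mul // ?pnz // sizep addnS => hs.
have e : forall x y : nat, (x + y.+1).-1 = x + y by move=> x y; rewrite addnS.
by rewrite leq_subRL // addnC.
Qed.

Lemma hprod_ev (f : 'I_m -> {poly F}) : hprod (fun h => ev (f h)) = ev (\prod_(h < m) f h).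
Proof. by apply/rowP => i; rewrite !mxE horner_prod; apply: eq_bigr => h _; rewrite mxE. Qed.

Lemma wt_ev (h : {poly F}) : h != 0 -> (size h <= n)%N -> (n - (size h).-1 <= wt (ev h))%N.
Proof.
move=> hnz hs.
set Z := [set i | (ev h) 0 i == 0].
have -> : wt (ev h) = #|~: Z|.
  by rewrite /wt; apply: eq_card => i; rewrite !inE.
have cZ := cardsC Z; rewrite card_ord in cZ.
have : (#|Z| < size h)%N.
  have := @max_poly_roots _ h [seq a i | i <- enum Z] hnz.
  rewrite size_map -cardE; apply.
    apply/allP => x /mapP [i]; rewrite mem_enum inE mxE => /eqP r ->.
    exact/rootP.
  by rewrite map_inj_uniq ?enum_uniq.
move=> H.
have -> : #|~: Z| = (n - #|Z|)%N by move: cZ; clear; lia.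
apply: leq_sub2l; move: H; case: (size h) => [//|s] /=; by rewrite ltnS.
Qed.


Theorem code_exists : exists (QX QZ : 'M[F]_n),
  [/\ is_CSS QX QZ, css_dim QX QZ = k, css_dist_ge QX QZ d &
    exists E : L -> 'rV[F]_n, Z_encoding QX QZ E /\ mult_friendly QX E m].
Proof.
pose MZ := Mx 1 l. pose MC := Mx p (l - k).
exists (dualmx <<MC>>%MS), (<<MZ>>%MS).
have DD : (dualmx (dualmx <<MC>>) :=: MC)%MS := dualdual MC.
have rZ : \rank MZ = l.
  apply/eqP; apply: (row_free_Mx a_inj); first exact: oner_neq0.
  by rewrite size_poly1.
have rC : \rank MC = (l - k)%N.
  apply/eqP; apply: (row_free_Mx a_inj); first exact: pnz.
  by rewrite sizep /= subnKC.
split.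
- rewrite /is_CSS DD genmxE; apply/row_subP => j.
  have -> : row j MC = ev (1 * (p * 'X^j)) by apply/rowP => i; rewrite !mxE mul1r.
  apply: Mx_sub; apply: size_pmul; rewrite size_polyXn; exact: ltn_ord.
- by rewrite /css_dim DD genmxE rZ rC subKn.
- move=> y /orP [/andP [yX ny] | /andP [yZ ny]].
  + have ynz : y != 0 by apply: contraNneq ny => ->; exact: sub0mx.
    have yC := dual_genP yX.
    apply: (leq_trans d2); rewrite addn1 ltnNge; apply/negP => wy.
    have [i0 Si0] : exists i0, y 0 i0 != 0.
      case: (pickP (fun i => y 0 i != 0)) => [i0 H|S0]; first by exists i0.
      by move/eqP: ynz; case; apply/rowP => i; rewrite mxE; move/negbFE/eqP: (S0 i).
    pose S := [set i | y 0 i != 0].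
    pose rs := [seq a i | i <- enum (S :\ i0)].
    pose t := \prod_(x <- rs) ('X - x%:P).
    have ts : (size t <= l - k)%N.
      rewrite size_prod_XsubC size_map -cardE.
      have := cardsD1 i0 S; rewrite inE Si0 /= add1n => <-.
      exact: wy.
    have e0 : (poly_rV t *m MC) *m y^T = 0.
      by rewrite -mulmxA -[MC *m y^T]trmxK trmx_mul trmxK yC trmx0 mulmx0.
    have := congr1 (fun M : 'M_1 => M 0 0) e0.
    rewrite mulMx poly_rV_K // mxE (bigD1 i0) //= big1 ?addr0.
      rewrite !mxE hornerM => /eqP; rewrite !mulf_eq0 (negPf (pa i0)) (negPf Si0) orbF /=.
      rewrite -rootE root_prod_XsubC; move=> /mapP [j].
      by rewrite mem_enum !inE => /andP [/eqP nj _] /a_inj ej; apply: nj.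
    move=> i ni; rewrite !mxE.
    have [->|yi] := eqVneq (y 0 i) 0; first by rewrite mulr0.
    have : root t (a i).
      by rewrite root_prod_XsubC; apply/mapP; exists i; rewrite // mem_enum !inE ni yi.
    by rewrite hornerM => /rootP ->; rewrite mulr0 mul0r.
  + move: ny; rewrite DD => ny.
    have ynz : y != 0 by apply: contraNneq ny => ->; exact: sub0mx.
    move: yZ ynz; rewrite genmxE => /sub_Mx [h [hs ->]]; rewrite mul1r => ynz.
    have hnz : h != 0 by apply: contraNneq ynz => ->; apply/eqP/rowP => i; rewrite !mxE horner0.
    apply: (leq_trans d1); apply: (leq_trans _ (wt_ev hnz (leq_trans hs ln))).
    apply: leq_sub2l; rewrite -!subn1; exact: leq_sub2r.
- exists (fun v => ev (gz v)); split.
  + split.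
    * by move=> c u v; rewrite gzP evD evZ.
    * by move=> z; rewrite genmxE -[gz z]mul1r; apply: Mx_sub; exact: (leq_trans (size_gz _) kl).
    * move=> z; rewrite DD => /sub_Mx [h [hs e]].
      have : gz z - p * h = 0.
        apply: (ev_eq0 a_inj); last by rewrite evB e subrr.
        rewrite (leq_trans (size_sub _ _)) // geq_max (leq_trans (size_gz _)) ?(leq_trans kl) //.
        exact: (leq_trans (size_pmul hs)).
      move/eqP; rewrite subr_eq0 => /eqP e2.
      by rewrite -(evth_gz z) e2 evthM pth mul0r.
    * move=> y; rewrite genmxE => /sub_Mx [f [fs ->]]; rewrite mul1r.
      exists (evth f); rewrite DD -evB.
      have [q [qs ->]] := gz_ev_sub fs.
      exact: Mx_sub.
  + pose V := Mx 1 n.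
    have Vu : V \in unitmx.
      rewrite -row_free_unit; apply: (row_free_Mx a_inj); first exact: oner_neq0.
      by rewrite size_poly1.
    exists (fun y => evth (rVpoly (y *m invmx V))); split.
      by move=> c u v; rewrite mulmxDl -scalemxAl linearP evthD evthZ.
    move=> z z' Hz.
    have : forall h, exists t : {poly F}, (size t <= l - k)%N /\ z' h = ev (gz (z h) + p * t).
      move=> h; move: (Hz h); rewrite /in_Enc DD => /sub_Mx [t [ts e]].
      by exists t; split => //; rewrite evD -e addrC subrK.
    case/fin_all_exists => t Ht.
    pose f h := gz (z h) + p * t h.
    have -> : hprod z' = hprod (fun h => ev (f h)).
      by apply/rowP => i; rewrite !mxE; apply: eq_bigr => h _; rewrite (proj2 (Ht h)).
    rewrite hprod_ev.
    have fs : forall h, (size (f h) <= l)%N.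
      move=> h; rewrite (leq_trans (size_polyD _ _)) // geq_max (leq_trans (size_gz _)) //.
      exact: size_pmul (proj1 (Ht h)).
    have Ps : (size (\prod_(h < m) f h)%R <= n)%N.
      apply: (leq_trans (size_poly_prod_leq _ _)).
      have sS : (\sum_(h < m) size (f h) <= m * l)%N.
        apply: (@leq_trans (\sum_(h < m) l)%N); first by apply: leq_sum => h _; exact: fs.
        by rewrite sum_nat_const card_ord.
      rewrite cardT size_enum_ord.
      have e1 : (m * l.-1 = m * l - m)%N by rewrite -subn1 mulnBr muln1.
      have sS1 : ((\sum_(h < m) size (f h)).+1 <= (m * l).+1)%N by rewrite ltnS.
      apply: (leq_trans (leq_sub2r m sS1)); move: mn; rewrite e1; lia.
    have -> : ev (\prod_(h < m) f h) = poly_rV (\prod_(h < m) f h) *m V.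
      by rewrite mulMx mul1r poly_rV_K.
    rewrite mulmxK // poly_rV_K // evth_prod; apply: eq_bigr => h _.
    by rewrite /f evthD evthM pth mul0r addr0 evth_gz.
Qed.

End Code.

Unset Implicit Arguments.
Set Strict Implicit.

Lemma prim_elt (F : finFieldType) (L : fieldExtType F) :
  exists th : L, forall v : L, exists g : {poly F}, v = (map_poly (in_alg L) g).[th].
Proof.
pose L' := FinSplittingFieldType F L.
have G : galois (1%AS : {subfield L'}) {:L'}%AS by apply: finField_galois; apply: sub1v.
have /and3P[_ sep _] := G.
have E := eq_adjoin_separable_generator sep (sub1v _).
exists (separable_generator (1%AS : {subfield L'}) {:L'}%AS) => v.
have : (v : L') \in <<1; separable_generator (1%AS : {subfield L'}) {:L'}%AS>>%VS.
  by rewrite -E memvf.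
by move/Fadjoin1_polyP.
Qed.

Theorem lemmaA1 (F : finFieldType) (L : fieldExtType F) (k r ell m : nat) :
  \dim {: L}%VS = k ->
  (k <= r)%N -> (r <= ell)%N -> (ell.*2 <= #|F|)%N ->
  (m * k.-1 < r)%N -> (m * ell.-1 < #|F| - r)%N ->
  exists (QX QZ : 'M[F]_(#|F| - r)),
    [/\ is_CSS QX QZ, css_dim QX QZ = k, css_dist_ge QX QZ (ell + 1 - r) &
      exists E : L -> 'rV[F]_(#|F| - r), Z_encoding QX QZ E /\ mult_friendly QX E m].
Proof.
move=> dimL kr rl lq _ mn.
have [th spanth] := @prim_elt F L.
have full : <<1%AS; th>>%VS = fullv.
  by apply/vspaceP => v; rewrite memvf; apply/Fadjoin1_polyP; exact: spanth.
have /polyOver1P [p pE] := minPolyOver 1%AS th.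
have pth : evth th p = 0 by rewrite /evth -pE minPolyxx.
have sizep : size p = k.+1.
  rewrite -(size_map_poly (in_alg L)) -pE size_minPoly adjoin_degreeE full.
  by rewrite dimv1 divn1 dimL.
have pnz : p != 0 by rewrite -size_poly_eq0 sizep.
have pdvd : forall f, evth th f = 0 -> p %| f.
  move=> f f0; rewrite -(dvdp_map (in_alg L)) -pE.
  by apply: minPoly_dvdp; [exact: alg_polyOver | exact/rootP].
pose R0 := [set x : F | root p x].
have cR0 : (#|R0| <= k)%N.
  have := @max_poly_roots _ p (enum R0) pnz.
  rewrite sizep -cardE ltnS; apply; last exact: enum_uniq.
  by apply/allP => x; rewrite mem_enum inE.
have H : (#|F| - r <= #|~: R0|)%N.
  have e : (#|R0| + #|~: R0| = #|F|)%N := cardsC R0. lia.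
pose a (i : 'I_(#|F| - r)) : F := enum_val (widen_ord H i).
have a_inj : injective a.
  by move=> i j /enum_val_inj /(congr1 val) /= /val_inj.
have pa : forall i, p.[a i] != 0.
  by move=> i; have := enum_valP (widen_ord H i); rewrite !inE.
apply: (code_exists (k := k) (l := ell) a_inj pth pdvd sizep pa spanth).
- lia.
- lia.
- lia.
- lia.
- exact: mn.
Qed.
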